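(* Let $G$ be an execution graph, $T$ a thread and $q$ an await-iteration index of $T$ in $G$. If $t\in[\mathit{start}_G^T(q):\mathit{end}_G^T(q))$, then $P_T(k_G^T(t))$ is not an $\mathtt{await}$ statement.
   Context: Programs. There are finite sets $\mathit{Register}$, $\mathit{Value}$, $\mathit{Location}$; $\mathit{State}=\mathit{Register}\to\mathit{Value}$; an update is a partial map $\mathit{Register}\rightharpoonup\mathit{Value}$, and $(\sigma\ll\mu)(r)=\mu(r)$ if $r\in\mathrm{Dom}(\mu)$, else $\sigma(r)$. Events are reads $R^m(x)$, writes $W^m(x,v)$, fences $F^m$, error $E$. A program consists of finitely many threads $T$, each with a finite statement sequence $P_T(0),\dots,P_T(|P_T|-1)$. A statement is $\mathtt{step}(\epsilon,\delta)$ with $\epsilon:\mathit{State}\to\mathit{Event}$, $\delta:\mathit{State}\times(\mathit{Value}\cup\{\bot\})\to\mathit{Update}$, or $\mathtt{await}(n,\kappa)$ with $n\in\mathbb N$, $\kappa:\mathit{State}\to\{0,1\}$. Syntactic restriction: if $P_T(k)=\mathtt{await}(n,\cdot)$ then $n\le k$ and no $P_T(k')$ with $k'\in[k-n:k)$ is an await. ($[a:b)=\{a,\dots,b-1\}$.) An execution graph $G$ has a set $G.\mathrm E$ of triples $\langle T,t,e\rangle$ and a partial reads-from map $G.\mathrm{rf}$ from reads to writes. Thread-local semantics: $k_G^T(0)=0$, $\sigma_G^T(0)$ fixed; if $k_G^T(t)\ge|P_T|$ or no triple $\langle T,t,\cdot\rangle$ is in $G.\mathrm E$, execution stops ($N_G^T=t$).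 Otherwise with $S=P_T(k_G^T(t))$: $e_G^T(t)=\epsilon(\sigma_G^T(t))$ for $S=\mathtt{step}(\epsilon,\cdot)$, $F^{\mathrm{rlx}}$ for an await; $v_G^T(t)$ is the value of the write that $G.\mathrm{rf}$ assigns to $\langle T,t,e_G^T(t)\rangle$ if this is a read with defined rf, else $\bot$. For a step: $k_G^T(t+1)=k_G^T(t)+1$; if $e_G^T(t)$ is a read with $v_G^T(t)=\bot$ then $N_G^T=t+1$, $\sigma_G^T(t+1)=\sigma_G^T(t)$, else $\sigma_G^T(t+1)=\sigma_G^T(t)\ll\delta(\sigma_G^T(t),v_G^T(t))$. For $\mathtt{await}(n,\kappa)$: $\sigma_G^T(t+1)=\sigma_G^T(t)$ and $k_G^T(t+1)=k_G^T(t)+1$ if $\kappa(\sigma_G^T(t))=0$, else $k_G^T(t)-n$. Awaits: $\mathit{end}_G^T(0)<\mathit{end}_G^T(1)<\cdots$ enumerate the steps $t$ (with $t<N_G^T$) at which $P_T(k_G^T(t))$ is an await; $\mathit{len}_G^T(q)=n$ where $P_T(k_G^T(\mathit{end}_G^T(q)))=\mathtt{await}(n,\cdot)$; $\mathit{start}_G^T(q)=\mathit{end}_G^T(q)-\mathit{len}_G^T(q)$. *)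

(* Defs.v *)
From mathcomp Require Import all_boot.
Set Implicit Arguments. Unset Strict Implicit. Unset Printing Implicit Defensive.

Inductive Mode := na | rlx | acq | rel | acqrel | sc.

Section Semantics.
Variables (Register Value Location Thread : finType).

Definition State := Register -> Value.
Definition Update := Register -> option Value.

Definition override (s : State) (mu : Update) : State :=
  fun r => match mu r with Some v => v | None => s r end.

Inductive Event :=
| Read of Mode & Location
| Write of Mode & Location & Value
| Fence of Mode
| Error.

Inductive Stmt :=
| step of (State -> Event) & (State -> option Value -> Update)
| await of nat & (State -> bool).

Definition is_await (S : Stmt) : bool :=
  match S with await _ _ => true | _ => false end.

Record Program := { prog : Thread -> seq Stmt; init : Thread -> State }.

Definition wf_program (P : Program) : Prop :=
  forall T k n kap, onth (prog P T) k = Some (await n kap) ->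
    n <= k /\ (forall k', k - n <= k' < k ->
                 forall S, onth (prog P T) k' = Some S -> ~~ is_await S).

(* Execution graph: a set of triples <T,t,e> and a partial reads-from map
   sending (read) triples to write triples <T',t',W^m(x,v)>. *)
Record Graph := {
  gE : Thread -> nat -> Event -> Prop;
  grf : Thread -> nat -> Event -> option (Thread * nat * (Mode * Location * Value))
}.

Variables (P : Program) (G : Graph) (T : Thread).

Definition valOf (t : nat) (e : Event) : option Value :=
  match e with
  | Read _ _ => match grf G T t e with Some (_, _, (_, _, v)) => Some v | None => None end
  | _ => None
  end.

(* (k_G^T(t), sigma_G^T(t)); meaningful for t <= N_G^T. *)
Fixpoint cfg (t : nat) : nat * State :=
  match t with
  | 0 => (0, init P T)
  | t'.+1 =>
    let (k, s) := cfg t' in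
    match onth (prog P T) k with
    | None => (k, s)
    | Some (step eps del) =>
        let e := eps s in
        let v := valOf t' e in
        (k.+1, match e, v with
               | Read _ _, None => s
               | _, _ => override s (del s v)
               end)
    | Some (await n kap) => if kap s then (k - n, s) else (k.+1, s)
    end
  end.

Definition kG (t : nat) : nat := (cfg t).1.
Definition sigmaG (t : nat) : State := (cfg t).2.

Definition stmt_at (k : nat) : option Stmt := onth (prog P T) k.

Definition evG (t : nat) : Event :=
  match stmt_at (kG t) with
  | Some (step eps _) => eps (sigmaG t)
  | Some (await _ _) => Fence rlx
  | None => Error
  end.

(* step t is a step-statement reading bot, which makes N_G^T = t+1 *)
Definition read_bot (t : nat) : Prop :=
  (exists eps del, stmt_at (kG t) = Some (step eps del)) /\
  (exists m x, evG t = Read m x) /\ valOf t (evG t) = None.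

(* t < N_G^T *)
Definition running (t : nat) : Prop :=
  forall t', t' <= t ->
    [/\ kG t' < size (prog P T),
        (exists e, gE G T t' e) &
        (t' < t -> ~ read_bot t')].

Definition await_step (t : nat) : Prop :=
  running t /\ exists n kap, stmt_at (kG t) = Some (await n kap).

(* is_end q t  <->  end_G^T(q) = t *)
Fixpoint is_end (q t : nat) : Prop :=
  match q with
  | 0 => await_step t /\ forall t', t' < t -> ~ await_step t'
  | q'.+1 => await_step t /\
      exists t0, [/\ is_end q' t0, t0 < t &
                     forall t', t0 < t' < t -> ~ await_step t']
  end.

Definition await_len (t : nat) : nat :=
  match stmt_at (kG t) with Some (await n _) => n | _ => 0 end.

(* start_G^T(q) = end_G^T(q) - len_G^T(q), given end_G^T(q) = te *)
Definition startG (te : nat) : nat := te - await_len te.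

End Semantics.

(* Main.v *)
Require Import Defs.
From mathcomp Require Import all_boot.
From mathcomp Require Import zify.

Section Aux.
Variables (Register Value Location Thread : finType).
Variables (P : Program Register Value Location Thread)
  (G : Graph Value Location Thread) (T : Thread).

Lemma kS_step s e d : stmt_at P T (kG P G T s) = Some (@step Register Value Location e d) ->
  kG P G T s.+1 = (kG P G T s).+1.
Proof.
rewrite /stmt_at /kG /=; case: (cfg P G T s) => k sg /= ->; by [].
Qed.

Lemma kS_await s n kap : stmt_at P T (kG P G T s) = Some (@await Register Value Location n kap) ->
  kG P G T s.+1 = if kap (sigmaG P G T s) then kG P G T s - n else (kG P G T s).+1.
Proof.
rewrite /stmt_at /kG /sigmaG /=; case: (cfg P G T s) => k sg /= ->.
by case: (kap sg).
Qed.

Lemma stmt_some k : k < size (prog P T) -> exists S, stmt_at P T k = Some S.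
Proof.
move=> hk; rewrite /stmt_at; case E: (onth _ k) => [S|]; first by exists S.
by move: (onthNE (prog P T) k); rewrite E /= => /esym; rewrite leqNgt hk.
Qed.

Lemma gen te (hr : running P G T te) m : forall s, s <= te -> te - s = m ->
  (exists s', [/\ s <= s', s' < te & exists n kap, stmt_at P T (kG P G T s') = Some (@await Register Value Location n kap)])
  \/ kG P G T te = kG P G T s + (te - s).
Proof.
elim: m => [|m IH] s hs hm.
  right; have E : te = s by lia.
  by subst te; rewrite subnn addn0.
have hs1 : s.+1 <= te by lia.
case: (IH s.+1 hs1 ltac:(lia)) => [[s' [h1 h2 h3]]|h].
  by left; exists s'; split => //; lia.
have [/stmt_some [S hS] _ _] := hr s hs.
case: S hS => [e d|n kap] hS.
  right; rewrite h (kS_step _ _ _ hS); lia.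
by left; exists s; split => //; exists n, kap.
Qed.

End Aux.

Theorem lemma2 (Register Value Location Thread : finType)
  (P : Program Register Value Location Thread)
  (G : Graph Value Location Thread) (T : Thread) (q te t : nat) :
  wf_program P ->
  is_end P G T q te ->
  startG P G T te <= t < te ->
  forall n kap, stmt_at P T (kG P G T t) <> Some (@await Register Value Location n kap).
Proof.
move=> wf hend.
have [hr [n0 [kap0 hk]]] : await_step P G T te by case: q hend => [|q] [].
rewrite /startG /await_len hk.
have [hn0 hw0] := wf T _ _ _ hk.
set k := kG P G T te in hk hn0 hw0.
move=> ht.
have [d hd] : exists d, te - t = d by eexists.
elim: d {-2}d (leqnn d) t ht hd => [|D IHD] d hdD t ht hd; first lia.
move=> n kap hj.
have [hn hwj] := wf T _ _ _ hj.
have hte : t.+1 <= te by lia.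
case: (@gen _ _ _ _ P G T te hr _ t.+1 hte erefl) => [[s' [h1 h2 [n' [kap' h3]]]]|h].
  apply: (IHD (te - s') _ s' _ erefl n' kap' h3); lia.
move: h; rewrite (@kS_await _ _ _ _ P G T _ _ _ hj).
set j := kG P G T t in hj hn hwj *.
case: (kap _) => h.
-
  have [hlt|hge] := ltnP k j.
    by move: (hwj k ltac:(lia) _ hk).
  have [heq|hne] := eqVneq k j.
    rewrite heq hj in hk; case: hk => hnn _; lia.
  by move: (hw0 j ltac:(lia) _ hj).
- by move: (hw0 j ltac:(lia) _ hj).
Qed.
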